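(* Let $(A_k,b_k,c_k)_{k\in\mathbb{Z}}$ and $(\tilde A_k,\tilde b_k,\tilde c_k)_{k\in\mathbb{Z}}$ be algebraically equivalent discrete-time systems, with $(\tilde A_k,\tilde b_k,\tilde c_k)$ in controller canonical form. Then for every $k\in\mathbb{Z}$, the first coordinate of $\tilde c_k$ is zero if and only if $c_k\operatorname{adj}(A_k)b_k=0$.
   Context: A system $(A_k,b_k,c_k)$ means $x_{k+1}=A_kx_k+b_ku_k$, $y_k=c_kx_k$ with $A_k\in\mathbb{R}^{n\times n}$, $b_k\in\mathbb{R}^{n\times1}$, $c_k\in\mathbb{R}^{1\times n}$. Algebraic equivalence: there are invertible $T_k$ with $\tilde A_k=T_{k+1}A_kT_k^{-1}$, $\tilde b_k=T_{k+1}b_k$, $\tilde c_k=c_kT_k^{-1}$ for all $k$. Controller canonical form: $\tilde b_k=(0,\dots,0,1)^T$ and $\tilde A_k$ has ones on the superdiagonal, zeros elsewhere in the first $n-1$ rows, and an arbitrary last row. $\operatorname{adj}$ denotes the adjugate matrix. *)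

(* Defs.v *)
From HB Require Import structures.
From mathcomp Require Import all_boot all_order all_algebra.
Set Implicit Arguments. Unset Strict Implicit. Unset Printing Implicit Defensive.
Import Order.TTheory GRing.Theory Num.Theory.
Local Open Scope ring_scope.

(* A discrete-time system (A_k, b_k, c_k)_{k in Z} of state dimension n:
   x_{k+1} = A_k x_k + b_k u_k,  y_k = c_k x_k. *)

Definition alg_equiv (R : comUnitRingType) (n : nat)
  (A : int -> 'M[R]_n) (b : int -> 'cV[R]_n) (c : int -> 'rV[R]_n)
  (A' : int -> 'M[R]_n) (b' : int -> 'cV[R]_n) (c' : int -> 'rV[R]_n) : Prop :=
  exists T : int -> 'M[R]_n,
    (forall k, T k \in unitmx) /\
    (forall k, A' k = T (k + 1) *m A k *m invmx (T k)
            /\ b' k = T (k + 1) *m b k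
            /\ c' k = c k *m invmx (T k)).

Definition controller_canonical (R : nzRingType) (n : nat)
  (A' : int -> 'M[R]_n.+1) (b' : int -> 'cV[R]_n.+1) : Prop :=
  forall k,
    b' k = \col_(i < n.+1) (if i == ord_max then 1 else 0)
    /\ (forall i j : 'I_n.+1, i != ord_max ->
          A' k i j = (if (j : nat) == i.+1 then 1 else 0)).

(* Main.v *)
Require Import Defs.
From HB Require Import structures.
From mathcomp Require Import all_boot all_order all_algebra.
Import Order.TTheory GRing.Theory Num.Theory.
Local Open Scope ring_scope.

Lemma adjM_idom (R : idomainType) n (M N : 'M[R]_n) :
  \det M * \det N != 0 -> \adj (M *m N) = \adj N *m \adj M.
Proof.
move=> hd; apply/eqP; rewrite -subr_eq0; apply/eqP.
set D := _ - _.
have h0 : (M *m N) *m D = 0.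
  rewrite /D mulmxBr mul_mx_adj !mulmxA -(mulmxA M) mul_mx_adj.
  rewrite mul_mx_scalar -scalemxAl mul_mx_adj scale_scalar_mx det_mulmx mulrC.
  by rewrite subrr.
have : \adj (M *m N) *m (M *m N *m D) = 0 by rewrite h0 mulmx0.
rewrite mulmxA mul_adj_mx mul_scalar_mx => /eqP.
by rewrite scalemx_eq0 det_mulmx (negbTE hd) /= => /eqP.
Qed.

Lemma adjMl (R : fieldType) n (P X : 'M[R]_n) :
  P \in unitmx -> \adj (P *m X) = \adj X *m \adj P.
Proof.
move=> hP.
pose Y := char_poly_mx (- X).
pose g := horner_eval (0 : R).
have hY : \det Y != 0.
  by rewrite -/(char_poly (- X)) monic_neq0 // char_poly_monic.
have hPd : \det (P ^ polyC)%sesqui != 0.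
  by rewrite det_map_mx polyC_eq0 -unitfE -unitmxE.
have e := @adjM_idom _ _ _ Y (mulf_neq0 hPd hY).
have eP : map_mx g (map_mx polyC P) = P.
  by apply/matrixP => i j; rewrite !mxE /g horner_evalE hornerC.
have eY : map_mx g Y = X.
  apply/matrixP => i j; rewrite /Y !mxE /g horner_evalE.
  by rewrite hornerD hornerN hornerMn hornerX hornerC mul0rn sub0r opprK.
have := congr1 (map_mx g) e.
by rewrite map_mxM !map_mx_adj map_mxM eP eY.
Qed.

Lemma adjMr (R : fieldType) n (X Q : 'M[R]_n) :
  Q \in unitmx -> \adj (X *m Q) = \adj Q *m \adj X.
Proof.
move=> hQ; apply: trmx_inj.
rewrite trmx_adj trmx_mul adjMl ?unitmx_tr // trmx_mul !trmx_adj //.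
Qed.

Lemma canon_adj (R : comNzRingType) n (A : 'M[R]_n.+1) (b : 'cV[R]_n.+1) (c : 'rV[R]_n.+1) :
  b = \col_(i < n.+1) (if i == ord_max then 1 else 0) ->
  (forall i j : 'I_n.+1, i != ord_max -> A i j = (if (j : nat) == i.+1 then 1 else 0)) ->
  (c *m \adj A *m b) 0 0 = (-1) ^+ n * c 0 0.
Proof.
move=> -> hA.
have hcol : forall i : 'I_n.+1, (\adj A *m \col_(i < n.+1) (if i == ord_max then 1 else 0)) i 0
    = if i == ord0 then (-1) ^+ n else 0.
  move=> i; rewrite mxE (bigD1 ord_max) //= big1 => [|j hj]; last first.
    by rewrite mxE (negbTE hj) mulr0.
  rewrite mxE eqxx mulr1 addr0 mxE /cofactor.
  have hrow : forall (r : 'I_n) (s : 'I_n.+1), A (lift ord_max r) s = if (s : nat) == r.+1 then 1 else 0.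
    move=> r s; have hl : (lift ord_max r : nat) = r by rewrite /= /bump leqNgt ltn_ord.
    have hne : lift ord_max r != ord_max.
      by apply/eqP => h0; have := congr1 (@nat_of_ord _) h0; rewrite hl /= => h; have := ltn_ord r; rewrite h ltnn.
    rewrite (hA _ _ hne). by rewrite hl.
  case: eqP => [->|hi].
    have -> : row' ord_max (col' ord0 A) = 1%:M.
      apply/matrixP => r s; rewrite !mxE hrow /= /bump /= !add1n eqSS.
      have [->|h] := eqVneq s r; first by rewrite eqxx.
      rewrite ifF //; apply/eqP => e; move/negP: h; apply; apply/eqP; apply: val_inj; done.
    by rewrite det1 mulr1 /= addn0.
  have hi0 : (0 < i)%N by rewrite lt0n; apply/eqP => h; apply: hi; apply: val_inj.
  have hn : (0 < n)%N by rewrite -ltnS (leq_ltn_trans hi0 (ltn_ord i)).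
  pose s0 : 'I_n := Ordinal hn.
  rewrite (expand_det_col _ s0) big1 ?mulr0 // => r _.
  rewrite !mxE hrow.
  have -> : (lift i s0 : nat) = 0%N by rewrite /= /bump leqNgt hi0.
  by rewrite mul0r.
rewrite -mulmxA mxE (bigD1 ord0) //= big1 => [|j hj]; last first.
  by rewrite hcol (negbTE hj) mulr0.
by rewrite hcol eqxx addr0 mulrC.
Qed.

Lemma adjE (R : fieldType) n (Q : 'M[R]_n) :
  Q \in unitmx -> \adj Q = \det Q *: invmx Q.
Proof.
move=> hQ; rewrite /invmx hQ scalerA mulfV ?scale1r //.
by rewrite -unitfE -unitmxE.
Qed.

Theorem proposition7 (R : realFieldType) (n : nat)
  (A : int -> 'M[R]_n.+1) (b : int -> 'cV[R]_n.+1) (c : int -> 'rV[R]_n.+1)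
  (A' : int -> 'M[R]_n.+1) (b' : int -> 'cV[R]_n.+1) (c' : int -> 'rV[R]_n.+1) :
  alg_equiv A b c A' b' c' ->
  controller_canonical A' b' ->
  forall k : int, c' k 0 0 = 0 <-> (c k *m \adj (A k) *m b k) 0 0 = 0.
Proof.
move=> [T [hT hE]] hC k.
have [eA [eb ec]] := hE k.
have [hb hA'] := hC k.
have hc := @canon_adj _ _ _ _ (c' k) hb hA'.
have hT0 := hT k. have hT1 := hT (k + 1).
have hT0i : invmx (T k) \in unitmx by rewrite unitmx_inv.
have key : c' k *m \adj (A' k) *m b' k
    = (\det (invmx (T k)) * \det (T (k + 1))) *: (c k *m \adj (A k) *m b k).
  rewrite eA eb ec adjMr // adjMl // (@adjE _ _ _ hT0i) (@adjE _ _ _ hT1) invmxK.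
  rewrite -!scalemxAl -!scalemxAr -!scalemxAl scalerA; congr (_ *: _).
  by rewrite !mulmxA mulmxKV // mulmxKV.
have hs : \det (invmx (T k)) * \det (T (k + 1)) != 0.
  by rewrite mulf_neq0 // -unitfE -unitmxE.
move: hc; rewrite key mxE => hc.
split => h.
  by move: hc; rewrite h mulr0 => /eqP; rewrite mulf_eq0 (negbTE hs) /= => /eqP.
by move: hc; rewrite h mulr0 => /esym/eqP; rewrite mulf_eq0 signr_eq0 /= => /eqP.
Qed.
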